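(* Let $S$ be an epsilon-strongly $G$-graded ring such that $S_g\neq0$ for only finitely many $g\in G$. Define recursively $1_{(0)}=1_S$ and, as long as $1_{(j)}\neq0$: $S^{(j)}=1_{(j)}S$, which is an epsilon-strongly $G$-graded ring with components $1_{(j)}S_g$, identity $1_{(j)}$ and $\epsilon^{(j)}_g=1_{(j)}\epsilon_g$; let $e^{(j)}_1,\dots,e^{(j)}_{k_j}$ be the minimal elements of $B(\mathcal{E}^{(j)}_G)^*$, where $B(\mathcal{E}^{(j)}_G)$ is the multiplicative semigroup generated by $\{\epsilon^{(j)}_g:g\in G\}$; and set $1_{(j+1)}=1_{(j)}-\sum_{i=1}^{k_j}e^{(j)}_i$. Assume that at every step $j$ with $1_{(j)}\neq0$ all the minimal elements $e^{(j)}_i$ are epsilon-central in $S^{(j)}$, i.e. $N^{(j)}(e^{(j)}_i)=\{g\in G:e^{(j)}_i\epsilon^{(j)}_g=e^{(j)}_i\}$ is a subgroup of $G$. Then the process stops after finitely many steps and $S$ is a finite direct sum of rings, each of which is either of the form $e^{(j)}_iS$ and strongly $N^{(j)}(e^{(j)}_i)$-graded (by the components $e^{(j)}_iS_g$, $g\in N^{(j)}(e^{(j)}_i)$), or is a ring $1_{(l)}S$ whose induced gradation is trivial (i.e. $1_{(l)}S_g=0$ for all $g\neq e$).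
   Context: $G$ is a group with identity $e$; $S=\bigoplus_{g\in G}S_g$ is an associative unital ring graded by $G$, $R=S_e$, $XY$ denotes finite sums of products. $S$ is epsilon-strongly graded: each ideal $S_gS_{g^{-1}}$ of $R$ has an identity $\epsilon_g$ with $\epsilon_gs=s=s\epsilon_{g^{-1}}$ for $s\in S_g$; $\epsilon_e=1_S$; each $\epsilon_g$ is an idempotent in $Z(R)$. For a semigroup $B$ of idempotents containing $0$, $B^*=B\setminus\{0\}$ is ordered by $a\le b$ iff $a=ab$. A ring graded by a subgroup $H$ is strongly $H$-graded if $A_gA_h=A_{gh}$ for all $g,h\in H$. *)

(* Defs.v *)
From HB Require Import structures.
From mathcomp Require Import all_boot all_order all_algebra.
Set Implicit Arguments.
Unset Strict Implicit.
Unset Printing Implicit Defensive.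
Import GRing.Theory.
Local Open Scope ring_scope.

(* A grading is a family A : G -> S -> Prop of subsets (A g = S_g). *)

Definition prodset (S : pzRingType) (X Y : S -> Prop) (t : S) : Prop :=
  exists n (a b : 'I_n -> S),
    (forall i, X (a i) /\ Y (b i)) /\ t = \sum_(i < n) a i * b i.

Definition is_grading (G : groupType) (S : pzRingType) (A : G -> S -> Prop) :=
  [/\ forall g, A g 0 /\ (forall x y, A g x -> A g y -> A g (x - y)),
      forall g h x y, A g x -> A h y -> A (g * h)%g (x * y),
      forall s : S, exists n (gs : 'I_n -> G) (xs : 'I_n -> S),
        [/\ injective gs, forall i, A (gs i) (xs i) & s = \sum_(i < n) xs i] &
      forall n (gs : 'I_n -> G) (xs : 'I_n -> S), injective gs ->
        (forall i, A (gs i) (xs i)) -> \sum_(i < n) xs i = 0 ->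
        forall i, xs i = 0].

Definition eps_strong (G : groupType) (S : pzRingType) (A : G -> S -> Prop)
  (eps : G -> S) :=
  forall g : G,
  [/\ prodset (A g) (A (g^-1)%g) (eps g),
      forall t, prodset (A g) (A (g^-1)%g) t -> eps g * t = t /\ t * eps g = t &
      forall s, A g s -> eps g * s = s /\ s * eps (g^-1)%g = s].

Definition finite_support (G : groupType) (S : pzRingType) (A : G -> S -> Prop) :=
  exists l : seq G, forall g s, A g s -> s != 0 -> g \in l.

Definition Bset (G : groupType) (S : pzRingType) (eps : G -> S) (u x : S) :=
  exists n (gs : 'I_n.+1 -> G), x = \prod_(i < n.+1) (u * eps (gs i)).

(* minimal elements of B(E^(u))^*, for the order a <= b iff a = ab *)
Definition minB (G : groupType) (S : pzRingType) (eps : G -> S) (u e : S) :=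
  [/\ Bset eps u e, e != 0 &
      forall b, Bset eps u b -> b != 0 -> b = b * e -> b = e].

Definition step (G : groupType) (S : pzRingType) (eps : G -> S) (u u' : S) :=
  exists es : seq S,
    [/\ uniq es, forall e, e \in es <-> minB eps u e &
        u' = u - \sum_(e <- es) e].

Inductive reach (G : groupType) (S : pzRingType) (eps : G -> S) : S -> Prop :=
| reach_one : reach eps 1
| reach_step u u' : reach eps u -> u != 0 -> step eps u u' -> reach eps u'.

Definition Nset (G : groupType) (S : pzRingType) (eps : G -> S) (u e : S)
  (g : G) : Prop := e * (u * eps g) = e.

Definition is_subgroup (G : groupType) (H : G -> Prop) :=
  [/\ H 1%g, forall g h, H g -> H h -> H (g * h)%g & forall g, H g -> H (g^-1)%g].

Definition compA (G : groupType) (S : pzRingType) (A : G -> S -> Prop)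
  (f : S) (g : G) (t : S) : Prop := exists s, A g s /\ t = f * s.

Definition strongly_graded_by (G : groupType) (S : pzRingType)
  (A : G -> S -> Prop) (f : S) (H : G -> Prop) :=
  (forall g s, ~ H g -> A g s -> f * s = 0) /\
  (forall g h, H g -> H h -> forall t,
      compA A f (g * h)%g t <-> prodset (compA A f g) (compA A f h) t).

Definition strong_piece (G : groupType) (S : pzRingType) (A : G -> S -> Prop)
  (eps : G -> S) (f : S) :=
  exists u, [/\ reach eps u, u != 0, minB eps u f &
                strongly_graded_by A f (Nset eps u f)].

Definition trivial_piece (G : groupType) (S : pzRingType) (A : G -> S -> Prop)
  (eps : G -> S) (f : S) :=
  reach eps f /\ (forall g s, g != 1%g -> A g s -> f * s = 0).

(* Main.v *)
Require Import Defs.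
From HB Require Import structures.
From mathcomp Require Import all_boot all_order all_algebra.
From Stdlib Require Import ClassicalEpsilon.
Import GRing.Theory.
Local Open Scope ring_scope.

Section Main.
Local Set Implicit Arguments.
Variables (G : groupType) (S : pzRingType) (A : G -> S -> Prop) (eps : G -> S).
Hypothesis HA : is_grading A.
Hypothesis HE : eps_strong A eps.
Variable l : seq G.
Hypothesis Hl : forall g s, A g s -> s != 0 -> g \in l.

Lemma A0 g : A g 0.
Proof. by case: HA => H _ _ _; case: (H g). Qed.
Lemma AB g x y : A g x -> A g y -> A g (x - y).
Proof. by case: HA => H _ _ _; case: (H g) => _; apply. Qed.
Lemma AN g x : A g x -> A g (- x).
Proof. by move=> Hx; rewrite -sub0r; apply: AB => //; apply: A0. Qed.
Lemma AD g x y : A g x -> A g y -> A g (x + y).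
Proof. by move=> Hx Hy; rewrite -[y]opprK; apply: AB => //; apply: AN. Qed.
Lemma AM g h x y : A g x -> A h y -> A (g * h)%g (x * y).
Proof. by case: HA => _ H _ _; apply: H. Qed.
Lemma Asum g I (r : seq I) (P : pred I) (F : I -> S) :
  (forall i, P i -> A g (F i)) -> A g (\sum_(i <- r | P i) F i).
Proof. by move=> H; apply: (big_ind (A g)) => //; [apply: A0 | apply: AD]. Qed.

Lemma prodsetA g h t : prodset (A g) (A h) t -> A (g * h)%g t.
Proof.
case=> n [a [b [Hab ->]]]; apply: Asum => i _.
by case: (Hab i) => ??; apply: AM.
Qed.

Lemma eps_in g : A 1%g (eps g).
Proof. by case: (HE g) => H _ _; rewrite -(mulgV g); apply: prodsetA. Qed.

Lemma eps_idem g : eps g * eps g = eps g.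
Proof. by case: (HE g) => H1 H2 _; case: (H2 _ H1). Qed.

Lemma eps_l g s : A g s -> eps g * s = s.
Proof. by case: (HE g) => _ _ H /H []. Qed.
Lemma eps_r g s : A g s -> s * eps (g^-1)%g = s.
Proof. by case: (HE g) => _ _ H /H []. Qed.

Lemma eps_commR g r : A 1%g r -> eps g * r = r * eps g.
Proof.
move=> Hr; case: (HE g) => [[n [a [b [Hab Heps]]]] H2 _].
have P1 : prodset (A g) (A (g^-1)%g) (r * eps g).
  exists n, (fun i => r * a i), b; split.
    by move=> i; case: (Hab i) => Ha Hb; split => //; rewrite -[g]mul1g; apply: AM.
  by rewrite Heps mulr_sumr; apply: eq_bigr => i _; rewrite mulrA.
have P2 : prodset (A g) (A (g^-1)%g) (eps g * r).
  exists n, a, (fun i => b i * r); split.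
    by move=> i; case: (Hab i) => Ha Hb; split => //; rewrite -[(g^-1)%g]mulg1; apply: AM.
  by rewrite Heps mulr_suml; apply: eq_bigr => i _; rewrite mulrA.
case: (H2 _ P1) => E1 _; case: (H2 _ P2) => _ E2.
by rewrite -E1 -[in LHS]E2 mulrA.
Qed.

Lemma eps_comm g h : eps g * eps h = eps h * eps g.
Proof. exact: eps_commR (eps_in h). Qed.

Lemma eps_shift h g s : A h s -> s * eps g = eps (h * g)%g * s.
Proof.
move=> Hs.
case: (HE g) => [[n [a [b [Hab Heps]]]] _ _].
case: (HE (h * g)%g) => [[m [c [d [Hcd Heps2]]]] _ _].
have E1 : s * eps g = eps (h * g)%g * (s * eps g).
  rewrite Heps !mulr_sumr; apply: eq_bigr => i _.
  case: (Hab i) => Ha _.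
  by rewrite !mulrA -[eps _ * s * a i]mulrA eps_l //; apply: AM.
have E2 : eps (h * g)%g * s = eps (h * g)%g * s * eps g.
  rewrite Heps2 !mulr_suml; apply: eq_bigr => i _.
  case: (Hcd i) => _ Hd.
  have Hds : A (g^-1)%g (d i * s).
    have -> : (g^-1)%g = ((h * g)^-1 * h)%g by rewrite invgM mulgVK.
    by apply: AM.
  have := eps_r Hds; rewrite invgK => Hr.
  by rewrite -!mulrA [d i * (s * _)]mulrA Hr.
by rewrite E1 E2 mulrA.
Qed.

Lemma eps_out g : g \notin l -> eps g = 0.
Proof.
move=> Hg; case: (HE g) => [[n [a [b [Hab ->]]]] _ _].
apply: big1 => i _; case: (Hab i) => Ha _.
case: (eqVneq (a i) 0) => [->|/(Hl Ha) Hin]; first by rewrite mul0r.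
by rewrite Hin in Hg.
Qed.


Definition E (r : seq G) := \prod_(g <- r) eps g.
Definition good (u : S) := (forall s, u * s = s * u) /\ u * u = u.

Lemma E_nil : E [::] = 1. Proof. by rewrite /E big_nil. Qed.
Lemma E_cons g r : E (g :: r) = eps g * E r. Proof. by rewrite /E big_cons. Qed.
Lemma E_cat r1 r2 : E (r1 ++ r2) = E r1 * E r2. Proof. by rewrite /E big_cat. Qed.

Lemma comm_eps_E g r : eps g * E r = E r * eps g.
Proof.
have : GRing.comm (eps g) (E r) by apply: commr_prod => i _; apply: eps_comm.
by [].
Qed.

Lemma E_comm r1 r2 : E r1 * E r2 = E r2 * E r1.
Proof.
have : GRing.comm (E r2) (E r1).
  by apply: commr_prod => i _; apply: commr_sym; apply: comm_eps_E.
by [].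
Qed.

Lemma E_idem r : E r * E r = E r.
Proof.
elim: r => [|g r IH]; first by rewrite E_nil mulr1.
rewrite E_cons -mulrA [E r * _]mulrA -comm_eps_E -mulrA IH mulrA eps_idem //.
Qed.

Lemma E_rem g r : g \in r -> E r = eps g * E (rem g r).
Proof.
elim: r => [//|x r IH]; rewrite inE /= => /orP [/eqP ->|Hg].
  by rewrite eqxx E_cons.
case: eqP => [->|_]; first by rewrite E_cons.
by rewrite !E_cons (IH Hg) !mulrA eps_comm.
Qed.

Lemma E_undup r : E (undup r) = E r.
Proof.
elim: r => [//|x r IH] /=; case: ifP => Hx.
  by rewrite IH E_cons (E_rem _ _ Hx) mulrA eps_idem.
by rewrite !E_cons IH.
Qed.

Lemma E_perm r1 r2 : perm_eq r1 r2 -> E r1 = E r2.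
Proof.
elim: r1 r2 => [|x r1 IH] r2 Hp.
  by move: Hp; rewrite perm_sym => /perm_nilP ->.
have Hx : x \in r2 by rewrite -(perm_mem Hp) mem_head.
rewrite E_cons (E_rem _ _ Hx); congr (_ * _); apply: IH.
by rewrite -(perm_cons x); apply: perm_trans Hp _; apply: perm_to_rem.
Qed.

Lemma E_eqmem r1 r2 : r1 =i r2 -> E r1 = E r2.
Proof.
move=> H; rewrite -E_undup -(E_undup r2); apply: E_perm.
apply: uniq_perm; rewrite ?undup_uniq // => x; by rewrite !mem_undup.
Qed.

Lemma E_out r : ~~ all (mem l) r -> E r = 0.
Proof.
elim: r => [//|x r IH] /=; rewrite negb_and => /orP [Hx|Hr].
  by rewrite E_cons eps_out // mul0r.
by rewrite E_cons IH // mulr0.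
Qed.

Lemma E_shift h s r : A h s -> s * E r = E (map (fun g => (h * g)%g) r) * s.
Proof.
move=> Hs; elim: r => [|g r IH]; first by rewrite /= !E_nil mulr1 mul1r.
by rewrite /= !E_cons mulrA (eps_shift _ Hs) -mulrA IH mulrA.
Qed.

Lemma E_fix e r : (forall g, g \in r -> e * eps g = e) -> e * E r = e.
Proof.
elim: r => [|g r IH] H; first by rewrite E_nil mulr1.
rewrite E_cons mulrA H ?mem_head // IH // => x Hx; apply: H.
by rewrite inE Hx orbT.
Qed.

Lemma prod_u u r : good u -> r != [::] ->
  \prod_(g <- r) (u * eps g) = u * E r.
Proof.
case=> Hc Hi; elim: r => [//|g r IH] _.
rewrite big_cons; case: (eqVneq r [::]) => [->|Hr].
  by rewrite big_nil E_cons E_nil !mulr1.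
rewrite IH // E_cons -mulrA [eps g * _]mulrA -Hc -mulrA [u * (_ * _)]mulrA Hi.
by rewrite mulrA.
Qed.

Definition Bs u x := exists r, r != [::] /\ x = u * E r.

Lemma Bset_Bs u x : good u -> (Bset eps u x <-> Bs u x).
Proof.
move=> Hu; split.
  case=> n [gs ->]; exists (map gs (index_enum 'I_n.+1)); split.
    by apply/eqP => H; have := map_f gs (mem_index_enum (@ord0 n)); rewrite H.
  rewrite -prod_u //; first by rewrite big_map.
  by apply/eqP => H; have := map_f gs (mem_index_enum (@ord0 n)); rewrite H.
case=> r [Hr ->]; exists (size r).-1, (fun i => nth 1%g r i).
rewrite -prod_u // (big_nth 1%g) big_mkord prednK //; by case: r Hr.
Qed.

Lemma min_rep u e : good u -> minB eps u e -> exists r, r != [::] /\ e = u * E r.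
Proof. by move=> Hu [/(Bset_Bs _ Hu) H _ _]. Qed.

Lemma e_props u e : good u -> minB eps u e ->
  [/\ e * u = e, u * e = e, e * e = e & forall g, e * eps g = eps g * e].
Proof.
move=> Hu Hm; have [r [_ ->]] := min_rep Hu Hm; case: Hu => Hc Hi.
split.
- by rewrite -mulrA -Hc mulrA Hi.
- by rewrite mulrA Hi.
- by rewrite -mulrA [E r * _]mulrA -Hc -mulrA E_idem mulrA Hi.
- by move=> g; rewrite -mulrA -comm_eps_E mulrA Hc -mulrA.
Qed.

Lemma Nset_eq u e g : good u -> minB eps u e ->
  (Nset eps u e g <-> e * eps g = e).
Proof.
move=> Hu Hm; have [Heu _ _ _] := e_props Hu Hm.
by rewrite /Nset mulrA Heu.
Qed.

Lemma dich u e g : good u -> minB eps u e -> e * eps g = e \/ e * eps g = 0.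
Proof.
move=> Hu Hm; have [Heu Hue Hee Hce] := e_props Hu Hm.
have [r [Hr Her]] := min_rep Hu Hm.
case: (eqVneq (e * eps g) 0) => [|Hb]; first by right.
left; case: Hm => _ _ Hmin; have := Hmin (e * (u * eps g)).
rewrite mulrA Heu; apply => //.
  apply/(Bset_Bs _ Hu); exists (r ++ [:: g]); split; first by case: (r) Hr.
  by rewrite Her E_cat E_cons E_nil mulr1 mulrA.
by rewrite -mulrA -Hce mulrA Hee.
Qed.

Lemma e_central_hom u e h s : good u -> minB eps u e ->
  is_subgroup (Nset eps u e) -> A h s -> e * s = s * e.
Proof.
move=> Hu Hm [N1 NM NV] Hs; have [Heu Hue Hee Hce] := e_props Hu Hm.
have [r [Hr Her]] := min_rep Hu Hm.
have NE : forall g, Nset eps u e g <-> e * eps g = e by move=> g; apply: Nset_eq.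
case: Hu => Hc Hi.
have Nr : forall g, g \in r -> e * eps g = e.
  move=> g Hg; rewrite Her -mulrA; congr (_ * _).
  by rewrite -comm_eps_E (E_rem _ _ Hg) mulrA eps_idem.
case: (eqVneq (e * eps h) e) => Hh.
- have Nh : Nset eps u e h by apply/NE.
  have E1 : s * e = u * E (map (fun g => (h * g)%g) r) * s.
    by rewrite Her mulrA -(Hc s) -mulrA (E_shift _ Hs) mulrA.
  have E2 : e * s = s * (u * E (map (fun g => (h^-1 * g)%g) r)).
    have Er : r = map (fun g => (h * g)%g) (map (fun g => (h^-1 * g)%g) r).
      by rewrite -map_comp -[LHS]map_id; apply: eq_map => g /=; rewrite mulVKg.
    by rewrite Her -mulrA {1}Er -(E_shift _ Hs) mulrA Hc -mulrA.
  have F1 : e * E (map (fun g => (h * g)%g) r) = e.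
    apply: E_fix => g /mapP [x Hx ->]; apply/NE; apply: NM => //; apply/NE.
    exact: Nr.
  have F2 : e * E (map (fun g => (h^-1 * g)%g) r) = e.
    apply: E_fix => g /mapP [x Hx ->]; apply/NE; apply: NM; first by apply: NV.
    by apply/NE; apply: Nr.
  have G1 : e * s * e = e * s by rewrite -mulrA E1 !mulrA Heu F1.
  have G2 : e * s * e = s * e.
    rewrite E2 -mulrA -[u * _ * e]mulrA.
    have -> : E (map (fun g => (h^-1 * g)%g) r) * e = e.
      have -> : E (map (fun g => (h^-1 * g)%g) r) * e = e * E (map (fun g => (h^-1 * g)%g) r).
        by rewrite Her mulrA -Hc -!mulrA E_comm.
      exact: F2.
    by rewrite Hue.
  by rewrite -G1 G2.
- have H0 : e * eps h = 0 by case: (dich h (conj Hc Hi) Hm) => // /eqP; rewrite (negbTE Hh).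
  have Hh' : e * eps (h^-1)%g = 0.
    case: (dich (h^-1)%g (conj Hc Hi) Hm) => // H1.
    have : Nset eps u e h by rewrite -[h]invgK; apply: NV; apply/NE.
    by move/NE => H2; move: Hh; rewrite H2 eqxx.
  have -> : e * s = 0 by rewrite -(eps_l Hs) mulrA H0 mul0r.
  by have -> : s * e = 0 by rewrite -(eps_r Hs) -mulrA -Hce Hh' mulr0.
Qed.

Lemma e_central u e : good u -> minB eps u e ->
  is_subgroup (Nset eps u e) -> forall s, e * s = s * e.
Proof.
move=> Hu Hm Hsg s; case: HA => _ _ Hdec _.
have [n [gs [xs [_ Hx ->]]]] := Hdec s.
rewrite mulr_sumr mulr_suml; apply: eq_bigr => i _.
exact: (e_central_hom Hu Hm Hsg (Hx i)).
Qed.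

Lemma sum_ex k e n (F : 'I_n -> S) :
  (forall i, exists s, A k s /\ F i = e * s) ->
  exists s, A k s /\ \sum_(i < n) F i = e * s.
Proof.
elim: n F => [|n IH] F H.
  by exists 0; split; [apply: A0 | rewrite big_ord0 mulr0].
rewrite big_ord_recr /=.
have [s1 [H1 ->]] := IH (fun i => F (widen_ord (leqnSn n) i)) (fun i => H _).
have [s2 [H2 ->]] := H ord_max.
by exists (s1 + s2); split; [apply: AD | rewrite mulrDr].
Qed.

Lemma e_strong u e : good u -> minB eps u e ->
  is_subgroup (Nset eps u e) -> strongly_graded_by A e (Nset eps u e).
Proof.
move=> Hu Hm Hsg; have [Heu Hue Hee Hce] := e_props Hu Hm.
have Hc := e_central Hu Hm Hsg.
have NE : forall g, Nset eps u e g <-> e * eps g = e by move=> g; apply: Nset_eq.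
split.
  move=> g s Hg Hs; case: (dich g Hu Hm) => H.
    by case: Hg; apply/NE.
  by rewrite -(eps_l Hs) mulrA H mul0r.
move=> g h Hg Hh t; split.
  case=> s [Hs ->].
  case: (HE g) => [[n [a [b [Hab Heps]]]] _ _].
  exists n, (fun i => e * a i), (fun i => e * (b i * s)); split.
    move=> i; case: (Hab i) => Ha Hb; split; first by exists (a i).
    exists (b i * s); split => //.
    by rewrite -[h](mulKg g); apply: AM.
  have -> : e * s = e * eps g * s by move/NE: Hg => ->.
  rewrite Heps mulr_sumr mulr_suml; apply: eq_bigr => i _.
  by rewrite !mulrA -[e * a i * e]mulrA -(Hc (a i)) mulrA Hee.
case=> n [a [b [Hab ->]]].
apply: sum_ex => i; case: (Hab i) => [[x [Hx ->]] [y [Hy ->]]].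
exists (x * y); split; first by apply: AM.
by rewrite !mulrA -[e * x * e]mulrA -(Hc x) mulrA Hee.
Qed.

Lemma uE_mul u r1 r2 : good u -> u * E r1 * (u * E r2) = u * E (r1 ++ r2).
Proof.
case=> Hc Hi; rewrite E_cat -mulrA [E r1 * _]mulrA -Hc.
by rewrite -mulrA mulrA Hi.
Qed.

Lemma min_orth u e f : good u -> minB eps u e -> minB eps u f -> e != f ->
  e * f = 0.
Proof.
move=> Hu He Hf Hne.
have [r1 [Hr1 Er1]] := min_rep Hu He; have [r2 [Hr2 Er2]] := min_rep Hu Hf.
have [Heu Hue Hee Hce] := e_props Hu He; have [Hfu Huf Hff Hcf] := e_props Hu Hf.
have Hef : e * f = f * e.
  by rewrite Er1 Er2 !uE_mul // !E_cat E_comm.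
have HB : Bset eps u (e * f).
  apply/(Bset_Bs _ Hu); exists (r1 ++ r2); split; first by case: (r1) Hr1.
  by rewrite Er1 Er2 uE_mul.
case: (eqVneq (e * f) 0) => // Hb.
case: He => _ _ Hmin1; case: Hf => _ _ Hmin2.
have E1 : e * f = e by apply: Hmin1 => //; rewrite Hef -mulrA Hee.
have E2 : e * f = f by apply: Hmin2 => //; rewrite -mulrA Hff.
by move: Hne; rewrite -{1}E1 E2 eqxx.
Qed.

Lemma step_props u es : good u ->
  (forall e, minB eps u e -> is_subgroup (Nset eps u e)) ->
  uniq es -> (forall e, e \in es <-> minB eps u e) ->
  [/\ good (u - \sum_(e <- es) e), (u - \sum_(e <- es) e) * u = u - \sum_(e <- es) e
    & forall e, e \in es -> e * (u - \sum_(e <- es) e) = 0].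
Proof.
move=> Hu Hsg Hun Hes.
set P := \sum_(e <- es) e.
have Hm : forall e, e \in es -> minB eps u e by move=> e /Hes.
have eP : forall e, e \in es -> e * P = e.
  move=> e He; rewrite /P mulr_sumr (bigD1_seq e) //=.
  have [_ _ Hee _] := e_props Hu (Hm _ He).
  rewrite Hee big_seq_cond big1 ?addr0 // => f /andP [Hf Hne].
  by apply: min_orth Hu (Hm _ He) (Hm _ Hf) _; rewrite eq_sym.
have PP : P * P = P.
  by rewrite {1}/P mulr_suml big_seq [RHS]big_seq; apply: eq_bigr => e /eP.
have Pu : P * u = P.
  rewrite /P mulr_suml big_seq [RHS]big_seq; apply: eq_bigr => e He.
  by have [-> _ _ _] := e_props Hu (Hm _ He).
have uP : u * P = P.
  rewrite /P mulr_sumr big_seq [RHS]big_seq; apply: eq_bigr => e He.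
  by have [_ -> _ _] := e_props Hu (Hm _ He).
have Pc : forall s, P * s = s * P.
  move=> s; rewrite /P mulr_suml mulr_sumr big_seq [RHS]big_seq.
  by apply: eq_bigr => e He; apply: e_central Hu (Hm _ He) (Hsg _ (Hm _ He)) s.
case: Hu => Hc Hi.
split.
- split; first by move=> s; rewrite mulrBl mulrBr Hc Pc.
  by rewrite mulrBl !mulrBr Hi uP Pu PP subrr subr0.
- by rewrite mulrBl Hi Pu.
- move=> e He; have [Heu _ _ _] := e_props (conj Hc Hi) (Hm _ He).
  by rewrite mulrBr Heu eP // subrr.
Qed.

Lemma mem_mask_nth (s : seq G) (t : seq bool) i :
  (i < size s)%N -> nth false t i -> nth 1%g s i \in mask t s.
Proof.
elim: s t i => [//|x s IH] [|b t] [|i] //=.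
- by move=> _ ->; rewrite mem_head.
- move=> Hi Hb; have := IH t i Hi Hb; case: b => // H.
  by rewrite inE H orbT.
Qed.

Lemma count_le_eq (t t' : seq bool) : size t = size t' ->
  (forall i, nth false t i -> nth false t' i) ->
  (count id t' <= count id t)%N -> t' = t.
Proof.
elim: t t' => [|b t IH] [|b' t'] //= [Hs] Hn Hc.
have Hb : b -> b' by move=> Hb; apply: (Hn 0%N).
have Hn' : forall i, nth false t i -> nth false t' i by move=> i; apply: (Hn i.+1).
have Hle : (count id t <= count id t')%N.
  elim: t t' Hs Hn' {IH Hc Hn} => [|c t IH2] [|c' t'] //= [Hs] Hn.
  apply: leq_add; last by apply: IH2 => // i; apply: (Hn i.+1).
  have /= Hcc := Hn 0%N; clear -Hcc.
  by case: c Hcc; case: c' => //= H; have := H isT.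
clear Hn; case: b b' Hb Hc => [] [] Hb Hc; try by have := Hb isT.
- by congr (_ :: _); apply: IH => //; move: Hc; rewrite /= !add1n ltnS.
- by move: Hc; rewrite /= add1n add0n ltnNge Hle.
- by congr (_ :: _); apply: IH.
Qed.

Definition k := size l.

Lemma Bs_cand u x : Bs u x -> x != 0 ->
  exists t : k.-tuple bool, x = u * E (mask t l) /\ mask t l != [::].
Proof.
case=> r [Hr ->] Hx.
have Hall : all (mem l) r.
  by apply/negPn/negP => H; move: Hx; rewrite E_out // mulr0 eqxx.
exists (map_tuple (fun g => g \in r) (in_tuple l)) => /=.
rewrite -filter_mask; split.
  congr (_ * _); apply: E_eqmem => y; rewrite mem_filter /=.
  case Hyr: (y \in r) => //=.
  by rewrite (allP Hall y Hyr : y \in l).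
case: r Hr Hall {Hx} => [//|g r] _ /= /andP [Hg _].
apply/eqP => H; have : g \in [seq x <- l | x \in g :: r].
  by rewrite mem_filter mem_head Hg.
by rewrite H.
Qed.

Lemma exists_g u : u != 0 -> exists g, u * eps g != 0.
Proof.
move=> Hu0; case: HA => _ _ Hdec _.
have [n [gs [xs [_ Hx H1]]]] := Hdec 1.
case: (boolP [exists i, u * eps (gs i) != 0]) => [/existsP [i Hi]|/existsPn Hall].
  by exists (gs i).
move: Hu0; rewrite -[u]mulr1 H1 mulr_sumr big1 ?eqxx // => i _.
move/negPn/eqP: (Hall i) => H0.
by rewrite -(eps_l (Hx i)) mulrA H0 mul0r.
Qed.

Lemma exists_min u : good u -> u != 0 ->
  exists t : k.-tuple bool, minB eps u (u * E (mask t l)).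
Proof.
move=> Hu Hu0; have [g Hg] := exists_g _ Hu0.
have Hgl : g \in l.
  by apply/negPn/negP => H; move: Hg; rewrite eps_out // mulr0 eqxx.
pose Pt := fun t : k.-tuple bool => (mask t l != [::]) && (u * E (mask t l) != 0).
pose t0 := map_tuple (fun x => x == g) (in_tuple l).
have Pt0 : Pt t0.
  rewrite /Pt /= -filter_mask.
  have Hf : [seq x <- l | x == g] =i [:: g].
    by move=> x; rewrite mem_filter inE; case: eqP => //= ->.
  rewrite (E_eqmem Hf) E_cons E_nil mulr1 Hg andbT.
  by apply/eqP => H; have := Hf g; rewrite H inE eqxx.
case: (arg_maxnP (fun t : k.-tuple bool => count id t) Pt0) => t Ptt Hmax.
exists t; move/andP: Ptt => [Hne Hb0].
split => //.
  by apply/(Bset_Bs _ Hu); exists (mask t l).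
move=> b' HB' Hb'0 Hb'b.
have [r' [Hr' Eb']] := (Bset_Bs _ Hu).1 HB'.
have Hall : all (mem l) r'.
  by apply/negPn/negP => H; move: Hb'0; rewrite Eb' E_out // mulr0 eqxx.
pose t'' := map_tuple (fun x => x \in r' ++ mask t l) (in_tuple l).
have Em : mask t'' l =i r' ++ mask t l.
  move=> x; rewrite /= -filter_mask mem_filter.
  case Hx: (x \in r' ++ mask t l) => //=; move: Hx; rewrite mem_cat => /orP [H|H].
    by rewrite (allP Hall x H : x \in l).
  by rewrite (mem_mask H).
have Eb'' : b' = u * E (mask t'' l).
  by rewrite (E_eqmem Em) -uE_mul // -Eb' -Hb'b.
have Pt'' : Pt t''.
  rewrite /Pt -Eb'' Hb'0 andbT; apply/eqP => H.
  have [x Hx] : exists x, x \in r' by case: (r') Hr' => [//|x ?] _; exists x; rewrite mem_head.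
  by have := Em x; rewrite H mem_cat Hx.
have Hc := Hmax t'' Pt''.
have Ht : (t'' : seq bool) = t.
  apply: count_le_eq => //; first by rewrite !size_tuple.
  move=> i Hi; case: (ltnP i (size l)) => Hil.
    rewrite /= (nth_map 1%g) //= mem_cat; apply/orP; right.
    exact: mem_mask_nth.
  by move: Hi; rewrite nth_default // size_tuple.
by rewrite Eb'' Ht.
Qed.

Definition msr u := #|[set t : k.-tuple bool | u * E (mask t l) != 0]|.

Lemma msr_dec u u' e (t : k.-tuple bool) : u' * u = u' -> u' * e = 0 ->
  e = u * E (mask t l) -> e != 0 -> (msr u' < msr u)%N.
Proof.
move=> H1 H2 He He0; apply: proper_card; apply/properP; split.
  apply/subsetP => x; rewrite !inE; apply: contraNN => /eqP H.
  by rewrite -H1 -mulrA H mulr0.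
exists t; first by rewrite inE -He.
by rewrite inE negbK -H1 -mulrA -He H2.
Qed.

Definition pb (P : Prop) : bool :=
  if excluded_middle_informative P then true else false.
Lemma pbP (P : Prop) : pb P <-> P.
Proof. by rewrite /pb; case: excluded_middle_informative. Qed.

Definition esl u := undup [seq c <- map (fun t : k.-tuple bool => u * E (mask t l))
  (enum {: k.-tuple bool}) | pb (minB eps u c)].

Lemma esl_spec u : good u -> uniq (esl u) /\ (forall e, e \in esl u <-> minB eps u e).
Proof.
move=> Hu; split; first exact: undup_uniq.
move=> e; rewrite mem_undup mem_filter; split.
  by case/andP => /pbP.
move=> Hm; apply/andP; split; first by apply/pbP.
case: (Hm) => /(Bset_Bs _ Hu) HB He0 _.
have [t [-> _]] := Bs_cand HB He0.
by apply: map_f; rewrite mem_enum.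
Qed.

Hypothesis Hsub : forall u e, reach eps u -> u != 0 -> minB eps u e ->
  is_subgroup (Nset eps u e).

Lemma reach_good u : reach eps u -> good u.
Proof.
elim=> [|v v' Hr Hv Hv0 [es [Hun Hes ->]]]; first by split=> [s|]; rewrite ?mul1r ?mulr1.
have Hsg : forall e, minB eps v e -> is_subgroup (Nset eps v e).
  by move=> e; apply: Hsub.
by case: (step_props es Hv Hsg Hun Hes).
Qed.

Definition Pfs (fs : seq S) u :=
  [/\ \sum_(f <- fs) f = u, uniq fs,
      (forall f g, f \in fs -> g \in fs -> f != g -> f * g = 0),
      (forall f, f \in fs -> [/\ f * f = f, f != 0, (forall s, f * s = s * f) & f * u = f]) &
      forall f, f \in fs -> strong_piece A eps f].

Lemma main_ind n : forall u, (msr u < n)%N -> reach eps u ->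
  reach eps 0 /\ exists fs, Pfs fs u.
Proof.
elim: n => [//|n IH] u Hn Hr.
have Hu := reach_good Hr.
case: (eqVneq u 0) => [Hu0|Hu0].
  split; first by rewrite -Hu0.
  exists [::]; split => //; by rewrite big_nil Hu0.
have [Hun Hes] := esl_spec Hu.
set es := esl u in Hun Hes.
set u' := u - \sum_(e <- es) e.
have Hsg : forall e, minB eps u e -> is_subgroup (Nset eps u e).
  by move=> e; apply: Hsub.
have [Hu' Hu'u Heu'] := step_props es Hu Hsg Hun Hes.
have Hr' : reach eps u' by apply: reach_step Hr Hu0 _; exists es.
have [t Ht] := exists_min Hu Hu0.
have Htin : u * E (mask t l) \in es by apply/Hes.
have Hdec : (msr u' < msr u)%N.
  have H0 : u' * (u * E (mask t l)) = 0 by rewrite Hu'.1 Heu'.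
  apply: (@msr_dec u u' _ t Hu'u H0 (erefl _)); by case: Ht.
have [H0r [fs' [Hs' Hun' Horth' Hprop' Hstr']]] := IH u' (leq_trans Hdec Hn) Hr'.
split => //; exists (es ++ fs').
have Hm : forall e, e \in es -> minB eps u e by move=> e /Hes.
have Hnin : forall e, e \in es -> e \notin fs'.
  move=> e He; apply/negP => Hf.
  have [_ He0 _ Heu'2] := Hprop' e Hf.
  by move: He0; rewrite -Heu'2 Heu' // eqxx.
split.
- by rewrite big_cat /= Hs' /u' addrC subrK.
- rewrite cat_uniq Hun Hun' andbT /=; apply/hasPn => x Hx; apply/negP => Hx2.
  by have := Hnin x Hx2; rewrite Hx.
- move=> f g; rewrite !mem_cat => /orP [Hf|Hf] /orP [Hg|Hg] Hfg.
  + by apply: min_orth Hu (Hm _ Hf) (Hm _ Hg) Hfg.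
  + have [_ _ Hgc Hgu] := Hprop' g Hg.
    by rewrite -Hgu Hgc mulrA Heu' // mul0r.
  + have [_ _ Hfc Hfu] := Hprop' f Hf.
    by rewrite Hfc -Hfu Hfc mulrA Heu' // mul0r.
  + by apply: Horth'.
- move=> f; rewrite mem_cat => /orP [Hf|Hf].
    have [Heu Hue Hee Hce] := e_props Hu (Hm _ Hf).
    split => //; first by case: (Hm _ Hf).
    exact: e_central Hu (Hm _ Hf) (Hsg _ (Hm _ Hf)).
  have [Hff Hf0 Hfc Hfu] := Hprop' f Hf; split => //.
  by rewrite -Hfu -mulrA Hu'u.
- move=> f; rewrite mem_cat => /orP [Hf|Hf]; last by apply: Hstr'.
  exists u; split => //; first exact: Hm.
  exact: e_strong Hu (Hm _ Hf) (Hsg _ (Hm _ Hf)).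
Qed.
End Main.

Theorem mainTheorem12 (G : groupType) (S : pzRingType)
  (A : G -> S -> Prop) (eps : G -> S) :
  is_grading A -> eps_strong A eps -> finite_support A ->
  (forall u e, reach eps u -> u != 0 -> minB eps u e ->
     is_subgroup (Nset eps u e)) ->
  reach eps 0 /\
  exists fs : seq S,
    [/\ \sum_(f <- fs) f = 1,
        forall i j, (i < size fs)%N -> (j < size fs)%N -> i != j ->
          fs`_i * fs`_j = 0,
        forall f, f \in fs -> f * f = f /\ f != 0 /\ (forall s, f * s = s * f) &
        forall f, f \in fs -> strong_piece A eps f \/ trivial_piece A eps f].
Proof.
move=> HA HE [l Hl] Hsub.
have [H0 [fs [Hs Hun Horth Hprop Hstr]]] :=
  main_ind HA HE l Hl Hsub _ (ltnSn _) (reach_one eps).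
split => //; exists fs; split => //.
- move=> i j Hi Hj Hij; apply: Horth; rewrite ?mem_nth //.
  by rewrite nth_uniq.
- by move=> f Hf; have [? ? ? _] := Hprop f Hf.
- by move=> f Hf; left; apply: Hstr.
Qed.
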